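(* Let $\pi\colon\mathsf{States}\to\mathbb{R}_{\ge0}$ be a potential function. For every program $C$ of the heap-manipulating probabilistic guarded command language, $$\mathsf{ert}[\![C]\!](0)\;\preceq\;\mathsf{aert}_\pi[\![C]\!](0)+\pi .$$
   Context: States and programs. Fix a finite set $\mathrm{Vars}$ of variables; values are $\mathbb{N}$, locations are $\mathbb{N}_{>0}$. A stack is $s\colon \mathrm{Vars}\to\mathbb{N}$; a heap is a partial map $h$ from a finite set $\mathrm{dom}(h)\subseteq\mathbb{N}_{>0}$ to $\mathbb{N}$. $h_1\perp h_2$ means disjoint domains; then $h_1\star h_2$ is their union; $h_\emptyset$ is the empty heap. $\mathsf{States}$ is the set of pairs $(s,h)$. $s(e)$ is the value of a (heap-independent) arithmetic expression $e$ under $s$, $s\models\varphi$ means the Boolean expression $\varphi$ holds under $s$, $s[x\mapsto v]$ is the updated stack. Programs are generated by $C ::= \mathtt{tick}(e) \mid x:=e \mid x:=\mathtt{alloc}(e) \mid \langle e\rangle:=e' \mid x:=\langle e\rangle \mid \mathtt{free}(e) \mid \{C\}[p]\{C\} \mid \mathtt{if}(\varphi)\{C\}\mathtt{else}\{C\} \mid C;C \mid \mathtt{while}(\varphi)\{C\}$, where $p$ is an expression with $s(p)\in[0,1]\cap\mathbb{Q}$ for all $s$. The statements other than tick, probabilistic choice, conditional, sequencing and loops are called atomic. Runtimes. $\mathbb{T}$ is the set of functions $\mathsf{States}\to[0,\infty]$, ordered pointwise by $\preceq$; arithmetic is pointwise with $0\cdot\infty=0$; $0$ denotes the constant-zero function.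 $[\varphi]$ is the $0/1$-valued Iverson bracket. Truncated subtraction: $a\dot- b=\max(a-b,0)$, $\infty\dot- b=\infty$ for finite $b$, $a\dot-\infty=0$. $(f\oplus g)(s,h)=\min\{f(s,h_1)+g(s,h_2)\mid h=h_1\star h_2\}$; $(f \mathbin{-\!\!\ominus} g)(s,h)=\sup\{g(s,h\star h')\dot- f(s,h')\mid h'\perp h\}$; $(\inf y\colon f)(s,h)=\inf_{v\in\mathbb{N}} f(s[y\mapsto v],h)$, $(\sup y\colon f)(s,h)=\sup_{v\in\mathbb{N}}f(s[y\mapsto v],h)$; $f[x/e](s,h)=f(s[x\mapsto s(e)],h)$. $\mathsf{tm}(e)(s,h)=s(e)$ if $h=h_\emptyset$, else $\infty$; $[e\mapsto e'](s,h)=0$ if $\mathrm{dom}(h)=\{s(e)\}$ and $h(s(e))=s(e')$, else $\infty$; $[e\mapsto -](s,h)=0$ if $\mathrm{dom}(h)=\{s(e)\}$, else $\infty$; $\bigoplus_{i=1}^{e} f_i$ is the separating sum over $i=1,\dots,s(e)$ (empty one: $[\mathsf{emp}]$, which is $0$ if $h=h_\emptyset$, else $\infty$). $\mathsf{ert}[\![C]\!]\colon\mathbb{T}\to\mathbb{T}$ (with $v$ fresh): $\mathsf{ert}[\![\mathtt{tick}(e)]\!](f)=\mathsf{tm}(e)\oplus f$; $\mathsf{ert}[\![x:=e]\!](f)=f[x/e]$; $\mathsf{ert}[\![x:=\mathtt{alloc}(e)]\!](f)=\sup v\colon (\bigoplus_{i=1}^{e}[v+i-1\mapsto 0])\mathbin{-\!\!\ominus}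 f[x/v]$; $\mathsf{ert}[\![\langle e\rangle:=e']\!](f)=[e\mapsto-]\oplus([e\mapsto e']\mathbin{-\!\!\ominus} f)$; $\mathsf{ert}[\![x:=\langle e\rangle]\!](f)=\inf v\colon [e\mapsto v]\oplus([e\mapsto v]\mathbin{-\!\!\ominus} f[x/v])$; $\mathsf{ert}[\![\mathtt{free}(e)]\!](f)=[e\mapsto-]\oplus f$; $\mathsf{ert}[\![C_1;C_2]\!](f)=\mathsf{ert}[\![C_1]\!](\mathsf{ert}[\![C_2]\!](f))$; conditional: $[\varphi]\cdot\mathsf{ert}[\![C_1]\!](f)+[\neg\varphi]\cdot\mathsf{ert}[\![C_2]\!](f)$; probabilistic choice: $p\cdot\mathsf{ert}[\![C_1]\!](f)+(1-p)\cdot\mathsf{ert}[\![C_2]\!](f)$; $\mathsf{ert}[\![\mathtt{while}(\varphi)\{C\}]\!](f)=\mathrm{lfp}\, g.\ [\neg\varphi]\cdot f+[\varphi]\cdot\mathsf{ert}[\![C]\!](g)$. Amortized runtimes. A potential function is $\pi\colon\mathsf{States}\to\mathbb{R}_{\ge0}$. $\mathbb{A}_\pi=\{X\colon\mathsf{States}\to\mathbb{R}\cup\{\infty\}\mid -\pi\le X\}$, ordered pointwise (complete lattice, least element $-\pi$). $\mathsf{aert}_\pi[\![C]\!]\colon\mathbb{A}_\pi\to\mathbb{A}_\pi$: $\mathsf{aert}_\pi[\![\mathtt{tick}(e)]\!](X)=e+X$; for atomic $C$ other than tick, $\mathsf{aert}_\pi[\![C]\!](X)=\mathsf{ert}[\![C]\!](X+\pi)-\pi$;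 sequencing by composition; conditional $[\varphi]\cdot\mathsf{aert}_\pi[\![C_1]\!](X)+[\neg\varphi]\cdot\mathsf{aert}_\pi[\![C_2]\!](X)$; probabilistic choice $p\cdot\mathsf{aert}_\pi[\![C_1]\!](X)+(1-p)\cdot\mathsf{aert}_\pi[\![C_2]\!](X)$; $\mathsf{aert}_\pi[\![\mathtt{while}(\varphi)\{C'\}]\!](X)=\mathrm{lfp}\,Y.\ [\neg\varphi]\cdot X+[\varphi]\cdot\mathsf{aert}_\pi[\![C']\!](Y)$ in $(\mathbb{A}_\pi,\preceq)$. *)

(* Defs.v *)
From HB Require Import structures.
From mathcomp Require Import all_boot all_order all_algebra.
From mathcomp Require Import boolp classical_sets reals constructive_ereal ereal.
Set Implicit Arguments. Unset Strict Implicit. Unset Printing Implicit Defensive.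
Import Order.TTheory GRing.Theory Num.Theory.
Local Open Scope classical_set_scope.
Local Open Scope ring_scope.
Local Open Scope ereal_scope.

Section HPGCL.
Variable V : finType.
Variable R : realType.

Definition stack := V -> nat.

Record heap := Heap {
  hfun :> nat -> option nat;
  hfun0 : hfun 0%N = None;
  hfin : exists n : nat, forall l, (n <= l)%N -> hfun l = None }.

Definition state := (stack * heap)%type.

Definition upd (s : stack) (x : V) (v : nat) : stack :=
  fun y => if y == x then v else s y.

Definition hsplit (h h1 h2 : heap) : Prop :=
  forall l, (h l = h1 l /\ h2 l = None) \/ (h l = h2 l /\ h1 l = None).

Definition aexp := stack -> nat.
Definition bexp := stack -> bool.
Definition pexp := stack -> rat.

Inductive prog :=
| Tick of aexp
| Assign of V & aexp
| Alloc of V & aexp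
| Store of aexp & aexp          (* <e> := e' *)
| Lookup of V & aexp
| Free of aexp
| PChoice (C1 : prog) (p : pexp) (hp : forall s, (0 <= p s <= 1)%R) (C2 : prog)
| Ite of bexp & prog & prog
| Seq of prog & prog
| While of bexp & prog.

Definition rt := state -> \bar R.

Definition tsub (a b : \bar R) : \bar R :=
  if b == +oo then 0 else maxe (a - b) 0.

Definition sepsum (f g : rt) : rt := fun st =>
  ereal_inf [set z | exists h1 h2, hsplit st.2 h1 h2 /\ z = f (st.1, h1) + g (st.1, h2)].

Definition sepimp (f g : rt) : rt := fun st =>
  ereal_sup [set z | exists h' hh, hsplit hh st.2 h' /\
                       z = tsub (g (st.1, hh)) (f (st.1, h'))].

Definition einf_nat (f : nat -> rt) : rt := fun st => ereal_inf [set f v st | v in setT].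
Definition esup_nat (f : nat -> rt) : rt := fun st => ereal_sup [set f v st | v in setT].

Definition subst (f : rt) (x : V) (e : aexp) : rt := fun st => f (upd st.1 x (e st.1), st.2).

Definition emp : rt := fun st => if `[< forall l, st.2 l = None >] then 0 else +oo.

Definition tm (e : aexp) : rt := fun st =>
  if `[< forall l, st.2 l = None >] then ((e st.1)%:R)%:E else +oo.

Definition pto (a v : stack -> nat) : rt := fun st =>
  if `[< forall l, st.2 l = if l == a st.1 then Some (v st.1) else None >] then 0 else +oo.

Definition pto_any (a : stack -> nat) : rt := fun st =>
  if `[< st.2 (a st.1) <> None /\ forall l, l <> a st.1 -> st.2 l = None >] then 0 else +oo.

Fixpoint bigsep_from (i n : nat) (F : nat -> rt) : rt :=
  match n with
  | 0%N => emp
  | n'.+1 => sepsum (F i) (bigsep_from i.+1 n' F)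
  end.

Definition bigsep (e : aexp) (F : nat -> rt) : rt := fun st =>
  bigsep_from 1 (e st.1) F st.

Definition lfpT (Phi : rt -> rt) : rt := fun st =>
  ereal_inf [set g st | g in [set g : rt | (forall t, 0 <= g t) /\
                                            (forall t, Phi g t <= g t)]].

Fixpoint ert (C : prog) (f : rt) : rt :=
  match C with
  | Tick e => sepsum (tm e) f
  | Assign x e => subst f x e
  | Alloc x e => esup_nat (fun v =>
      sepimp (bigsep e (fun i => pto (fun _ => (v + i - 1)%N) (fun _ => 0%N)))
             (subst f x (fun _ => v)))
  | Store e e' => sepsum (pto_any e) (sepimp (pto e e') f)
  | Lookup x e => einf_nat (fun v =>
      sepsum (pto e (fun _ => v)) (sepimp (pto e (fun _ => v)) (subst f x (fun _ => v))))
  | Free e => sepsum (pto_any e) f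
  | PChoice C1 p _ C2 => fun st =>
      (ratr (p st.1))%:E * ert C1 f st + (1 - ratr (p st.1))%:E * ert C2 f st
  | Ite b C1 C2 => fun st => if b st.1 then ert C1 f st else ert C2 f st
  | Seq C1 C2 => ert C1 (ert C2 f)
  | While b C' => lfpT (fun g st => if b st.1 then ert C' g st else f st)
  end.

Definition lfpA (pi : state -> R) (Phi : rt -> rt) : rt := fun st =>
  ereal_inf [set Y st | Y in [set Y : rt | (forall t, - (pi t)%:E <= Y t) /\
                                            (forall t, Phi Y t <= Y t)]].

Fixpoint aert (pi : state -> R) (C : prog) (X : rt) : rt :=
  match C with
  | Tick e => fun st => ((e st.1)%:R)%:E + X st
  | Assign _ _ | Alloc _ _ | Store _ _ | Lookup _ _ | Free _ =>
      fun st => ert C (fun t => X t + (pi t)%:E) st - (pi st)%:E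
  | PChoice C1 p _ C2 => fun st =>
      (ratr (p st.1))%:E * aert pi C1 X st + (1 - ratr (p st.1))%:E * aert pi C2 X st
  | Ite b C1 C2 => fun st => if b st.1 then aert pi C1 X st else aert pi C2 X st
  | Seq C1 C2 => aert pi C1 (aert pi C2 X)
  | While b C' => lfpA pi (fun Y st => if b st.1 then aert pi C' Y st else X st)
  end.

End HPGCL.

(* Main.v *)
Require Import Defs.
From mathcomp Require Import all_boot all_order all_algebra.
From mathcomp Require Import boolp classical_sets reals constructive_ereal ereal.
From mathcomp Require Import ring.
Import Order.TTheory GRing.Theory Num.Theory.
Local Open Scope ring_scope.
Local Open Scope ereal_scope.

Definition hemp : heap := @Heap (fun _ => None) erefl (ex_intro _ 0%N (fun _ _ => erefl)).

Lemma hsplit_emp1 (h : heap) : hsplit h hemp h.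
Proof. by move=> l; right. Qed.

Lemma hsplit_emp2 (h : heap) : hsplit h h hemp.
Proof. by move=> l; left. Qed.

Section P.
Context (V : finType) (R : realType).

Lemma sepsum_mono2 (f g h : rt V R) st :
  (forall t, g t <= h t) -> sepsum f g st <= sepsum f h st.
Proof.
move=> H; apply/ereal_infP => z [h1 [h2 [Hs ->]]].
apply: le_trans (ereal_inf_lbound _) _; first by exists h1, h2; split; [exact Hs|reflexivity].
by apply: leeD => //; exact: H.
Qed.

Lemma tsub_mono (a a' b : \bar R) : a <= a' -> tsub a b <= tsub a' b.
Proof.
move=> H; rewrite /tsub; case: ifP => // _.
by apply: le_max2 => //; apply: leeB.
Qed.

Lemma tsub_ge0 (a b : \bar R) : 0 <= tsub a b.
Proof. by rewrite /tsub; case: ifP => // _; rewrite le_max lexx orbT. Qed.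

Lemma sepimp_mono2 (f g h : rt V R) st :
  (forall t, g t <= h t) -> sepimp f g st <= sepimp f h st.
Proof.
move=> H; apply/ereal_supP => z [h' [hh [Hs ->]]].
apply: le_trans _ (ereal_sup_ubound _); last by exists h', hh; split; [exact Hs|reflexivity].
exact: tsub_mono.
Qed.

Lemma sepimp_ge0 (f g : rt V R) st : 0 <= sepimp f g st.
Proof.
apply: le_trans (tsub_ge0 (g (st.1, st.2)) (f (st.1, hemp))) _.
apply: ereal_sup_ubound; exists hemp, st.2; split => //; exact: hsplit_emp2.
Qed.

Lemma sepsum_ge0 (f g : rt V R) st :
  (forall t, 0 <= f t) -> (forall t, 0 <= g t) -> 0 <= sepsum f g st.
Proof. by move=> Hf Hg; apply/ereal_infP => z [h1 [h2 [_ ->]]]; apply: adde_ge0. Qed.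

Lemma pto_ge0 a v (t : state V) : 0 <= @pto V R a v t.
Proof. by rewrite /pto; case: ifP. Qed.

Lemma pto_any_ge0 a (t : state V) : 0 <= @pto_any V R a t.
Proof. by rewrite /pto_any; case: ifP. Qed.

Lemma tm_ge0 e (t : state V) : 0 <= @tm V R e t.
Proof. by rewrite /tm; case: ifP => // _; rewrite lee_fin ler0n. Qed.

Lemma p_ge0 (p : pexp V) (hp : forall s, (0 <= p s <= 1)%R) s :
  0 <= ((ratr (p s))%:E : \bar R).
Proof. by rewrite lee_fin ler0q; case/andP: (hp s). Qed.

Lemma q_ge0 (p : pexp V) (hp : forall s, (0 <= p s <= 1)%R) s :
  0 <= ((1 - ratr (p s))%:E : \bar R).
Proof.
rewrite lee_fin subr_ge0 -(rmorph1 (ratr : rat -> R)) ler_rat.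
by case/andP: (hp s).
Qed.

Lemma ert_mono (C : prog V) : forall f g : rt V R, (forall t, f t <= g t) ->
  forall st, ert C f st <= ert C g st.
Proof.
elim: C => [e|x e|x e|e e'|x e|e|C1 IH1 p hp C2 IH2|b C1 IH1 C2 IH2|C1 IH1 C2 IH2|b C' IH]
  f g H st /=.
- exact: sepsum_mono2.
- exact: H.
- apply/ereal_supP => z [v _ <-].
  apply: le_trans _ (ereal_sup_ubound _); last by exists v.
  by apply: sepimp_mono2 => t; apply: H.
- by apply: sepsum_mono2 => t; apply: sepimp_mono2.
- apply/ereal_infP => z [v _ <-].
  apply: le_trans (ereal_inf_lbound _) _; first by exists v.
  by apply: sepsum_mono2 => t; apply: sepimp_mono2 => t'; apply: H.
- exact: sepsum_mono2.
- apply: leeD; apply: lee_wpmul2l.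
  + exact: p_ge0.
  + exact: IH1.
  + exact: q_ge0.
  + exact: IH2.
- by case: (b st.1); [apply: IH1|apply: IH2].
- by apply: IH1 => t; apply: IH2.
- apply: le_ereal_inf => z [g' [Hg0 Hg] <-]; exists g' => //; split => // t.
  by apply: le_trans (Hg t); case: (b t.1).
Qed.

Lemma ert_ge0 (C : prog V) : forall f : rt V R, (forall t, 0 <= f t) ->
  forall st, 0 <= ert C f st.
Proof.
elim: C => [e|x e|x e|e e'|x e|e|C1 IH1 p hp C2 IH2|b C1 IH1 C2 IH2|C1 IH1 C2 IH2|b C' IH]
  f H st /=.
- by apply: sepsum_ge0 => // t; apply: tm_ge0.
- exact: H.
- apply: le_trans (sepimp_ge0 _ _ st) _.
  by apply: ereal_sup_ubound; exists 0%N.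
- apply: sepsum_ge0 => t; [exact: pto_any_ge0|exact: sepimp_ge0].
- apply/ereal_infP => z [v _ <-].
  apply: sepsum_ge0 => t; [exact: pto_ge0|exact: sepimp_ge0].
- by apply: sepsum_ge0 => // t; apply: pto_any_ge0.
- apply: adde_ge0; apply: mule_ge0.
  + exact: p_ge0.
  + exact: IH1.
  + exact: q_ge0.
  + exact: IH2.
- by case: (b st.1); [apply: IH1|apply: IH2].
- by apply: IH1 => t; apply: IH2.
- by apply/ereal_infP => z [g' [Hg0 Hg] <-].
Qed.

Lemma shift_ge0 (y : \bar R) (p : R) : - p%:E <= y -> 0 <= y + p%:E.
Proof. by move=> H; rewrite -leeBlDr // sub0e. Qed.

Lemma main (pi : state V -> R) (pi_ge0 : forall st, (0 <= pi st)%R) (C : prog V) :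
  forall X : rt V R, (forall t, - (pi t)%:E <= X t) ->
  (forall st, ert C (fun t => X t + (pi t)%:E) st <= aert pi C X st + (pi st)%:E) /\
  (forall st, - (pi st)%:E <= aert pi C X st).
Proof.
have atom : forall C0 : prog V, (forall f : rt V R, (forall t, 0 <= f t) -> forall st, 0 <= ert C0 f st) ->
  forall X : rt V R, (forall t, - (pi t)%:E <= X t) ->
  (forall st, ert C0 (fun t => X t + (pi t)%:E) st <=
      (ert C0 (fun t => X t + (pi t)%:E) st - (pi st)%:E) + (pi st)%:E) /\
  (forall st, - (pi st)%:E <= ert C0 (fun t => X t + (pi t)%:E) st - (pi st)%:E).
  move=> C0 H0 X HX; split => st; first by rewrite subeK.
  have H1 : 0 <= ert C0 (fun t => X t + (pi t)%:E) st by apply: H0 => t; exact: shift_ge0.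
  by have := leeB H1 (lexx (pi st)%:E); rewrite sub0e.
elim: C => [e|x e|x e|e e'|x e|e|C1 IH1 p hp C2 IH2|b C1 IH1 C2 IH2|C1 IH1 C2 IH2|b C' IH]
  X HX.
- split => -[s h] /=.
  + apply: le_trans (ereal_inf_lbound _) _.
      exists hemp, h; split; first exact: hsplit_emp1. reflexivity.
    by rewrite /tm /= asboolT // addeA.
  + apply: le_trans (HX (s, h)) _; apply: leeDr; by rewrite lee_fin ler0n.
- exact: (atom (Assign x e) (ert_ge0 _)).
- exact: (atom (Alloc x e) (ert_ge0 _)).
- exact: (atom (Store e e') (ert_ge0 _)).
- exact: (atom (Lookup x e) (ert_ge0 _)).
- exact: (atom (Free e) (ert_ge0 _)).
- have [A1 B1] := IH1 X HX; have [A2 B2] := IH2 X HX.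
  split => st /=.
  +
    apply: le_trans (leeD (lee_wpmul2l (p_ge0 _ hp st.1) (A1 st))
                          (lee_wpmul2l (q_ge0 _ hp st.1) (A2 st))) _.
    rewrite (@muleDr R) ?fin_num_adde_defl // (@muleDr R) ?fin_num_adde_defl // addeACA -!EFinM -EFinD.
    have -> : (ratr (p st.1) * pi st + (1 - ratr (p st.1)) * pi st = pi st)%R by ring.
    done.
  + have -> : ((- pi st)%:E : \bar R) = (ratr (p st.1))%:E * (- (pi st)%:E) +
                            (1 - ratr (p st.1))%:E * (- (pi st)%:E).
      by rewrite -!EFinN -!EFinM -EFinD; congr EFin; ring.
    apply: leeD; apply: lee_wpmul2l.
    * exact: p_ge0.
    * exact: B1.
    * exact: q_ge0.
    * exact: B2.
- have [A1 B1] := IH1 X HX; have [A2 B2] := IH2 X HX.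
  split => st /=; case: (b st.1).
  + exact: A1.
  + exact: A2.
  + exact: B1.
  + exact: B2.
- have [A2 B2] := IH2 X HX; have [A1 B1] := IH1 _ B2.
  split => st /=; last exact: B1.
  apply: le_trans (A1 st).
  by apply: ert_mono => t; apply: A2.
- split => st /=.
  + rewrite -leeBlDr //; apply/ereal_infP => z [Y [HY HP] <-].
    rewrite leeBlDr //; apply: ereal_inf_lbound.
    exists (fun t => Y t + (pi t)%:E) => //; split => t.
      exact: shift_ge0.
    have := HP t; case: (b t.1) => /= Ht.
      have [A _] := IH Y HY.
      by apply: le_trans (A t) _; apply: leeD.
    by apply: leeD.
  + by rewrite EFinN; apply/ereal_infP => z [Y [HY _] <-]; exact: HY.
Qed.

End P.

Theorem mainTheorem2 (V : finType) (R : realType) (pi : state V -> R)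
    (pi_ge0 : forall st, (0 <= pi st)%R) (C : prog V) (st : state V) :
  ert C (fun _ => 0) st <= aert pi C (fun _ => 0) st + (pi st)%:E.
Proof.
have HX : forall t, - (pi t)%:E <= (fun _ : state V => (0 : \bar R)) t.
  by move=> t; rewrite -EFinN lee_fin oppr_le0.
have H1 := (@main V R pi pi_ge0 C _ HX).1 st.
have H2 : ert C (fun _ => 0) st <=
    ert C (fun t => (fun _ : state V => (0 : \bar R)) t + (pi t)%:E) st.
  by apply: ert_mono => t; rewrite add0e lee_fin.
exact: (le_trans H2 H1).
Qed.
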